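(* Let $\mathcal M$ be a compact smooth geodesically convex manifold of intrinsic dimension $d$ with a probability measure $\mu$, let $X_1,\dots,X_\ell$ be i.i.d. from $\mu$ and let $\mathbf x\in\mathcal M$. Assume $\mu(B_{\mathbf x}(r))\ge Qr^d$ for all $r\le R$, where $Q,R>0$. Let $X_{\mathcal M}^{(\ell)}(\mathbf x)$ be a point among $X_1,\dots,X_\ell$ minimizing $d_{\mathcal M}(\mathbf x,\cdot)$. Then for every $\lambda>0$, $$\int_0^{\lambda^2R^2}\Pr\Big[d_{\mathcal M}\big(\mathbf x,X_{\mathcal M}^{(\ell)}(\mathbf x)\big)>\frac{\sqrt r}{\lambda}\Big]\,dr\le\frac{2\lambda^2\,\ell^{-2/d}}{(1-e^{-Q})^2}.$$
   Context: $d_{\mathcal M}$ is the geodesic distance on $\mathcal M$ and $B_{\mathbf x}(r)=\{\mathbf x'\in\mathcal M:d_{\mathcal M}(\mathbf x,\mathbf x')<r\}$. *)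

(* Defs.v *)
From HB Require Import structures.
From mathcomp Require Import all_boot all_order all_algebra.
From mathcomp Require Import all_classical all_reals all_analysis.
Set Implicit Arguments. Unset Strict Implicit. Unset Printing Implicit Defensive.
Import Order.TTheory GRing.Theory Num.Theory.
Local Open Scope ring_scope.
Local Open Scope classical_set_scope.

Definition is_metric (R : realType) (M : Type) (dist : M -> M -> R) : Prop :=
  [/\ forall x y, 0 <= dist x y,
      forall x y, dist x y = 0 <-> x = y,
      forall x y, dist x y = dist y x &
      forall x y z, dist x z <= dist x y + dist y z].

Definition oball (R : realType) (M : Type) (dist : M -> M -> R) (x : M) (r : R)
  : set M := [set y | dist x y < r].

(* X_1, ..., X_l are i.i.d. with law mu: the joint law is the product mu^l,
   i.e. P (cap_i X_i^-1 A_i) = prod_i mu(A_i) for all measurable A_i. *)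
Definition iid_from (dO dM : measure_display) (R : realType)
  (Omega : measurableType dO) (M : measurableType dM)
  (P : probability Omega R) (mu : probability M R) (l : nat)
  (X : 'I_l -> Omega -> M) : Prop :=
  (forall i, measurable_fun setT (X i)) /\
  forall A : 'I_l -> set M, (forall i, measurable (A i)) ->
    P (\bigcap_(i in setT) (X i @^-1` A i)) = (\prod_(i < l) mu (A i))%E.

(* The nearest sample X^{(l)}_M(x) among X_1..X_l (l = n.+1 >= 1 samples):
   an index minimizing dist x (X_i omega). *)
Definition nearest (R : realType) (Omega M : Type) (dist : M -> M -> R)
  (n : nat) (X : 'I_n.+1 -> Omega -> M) (x : M) (w : Omega) : M :=
  X ([arg min_(i < ord0) dist x (X i w)])%O w.

(* Main.v *)
Require Import Defs.
From HB Require Import structures.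
From mathcomp Require Import all_boot all_order all_algebra.
From mathcomp Require Import all_classical all_reals all_analysis.
From mathcomp Require Import ring lra measurable_realfun.
Import Order.TTheory GRing.Theory Num.Theory.
Local Open Scope ring_scope.
Local Open Scope classical_set_scope.

Lemma sum_bound (R : realType) (q : R) (N : nat) : 0 <= q < 1 ->
  \sum_(m < N) (2 * m%:R + 1) * q ^+ m <= 2 / (1 - q) ^+ 2.
Proof.
move=> /andP[q0 q1].
have key : forall N, (1 - q) ^+ 2 * \sum_(m < N) (2 * m%:R + 1) * q ^+ m
   = 1 + q - q ^+ N * ((2 * N%:R + 1) - (2 * N%:R - 1) * q).
  elim=> [|k IH]; first by rewrite big_ord0; lra.
  rewrite big_ord_recr /= mulrDr IH exprS.
  rewrite -[k.+1]addn1 natrD; set z := k%:R; rewrite exprD expr1; set y := q ^+ k; ring.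
have hq : 0 < (1 - q) ^+ 2 by rewrite exprn_gt0 // subr_gt0.
rewrite ler_pdivlMr // mulrC key.
have : 0 <= q ^+ N * ((2 * N%:R + 1) - (2 * N%:R - 1) * q).
  apply: mulr_ge0; first exact: exprn_ge0.
  have : (0:R) <= N%:R by [].
  nra.
lra.
Qed.

Lemma nearest_le (R : realType) (Omega M : Type) (dist : M -> M -> R)
  (n : nat) (X : 'I_n.+1 -> Omega -> M) (x : M) (w : Omega) :
  (forall j, dist x (nearest dist X x w) <= dist x (X j w)) /\
  exists i, nearest dist X x w = X i w.
Proof.
rewrite /nearest; case: arg_minP => // i _ Hi; split; last by exists i.
by move=> j; exact: Hi.
Qed.

Lemma meas_gt (R : realType) (dM : measure_display) (M : measurableType dM)
  (dist : M -> M -> R) (x : M) (s : R) :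
  (forall y r, measurable (oball dist y r)) ->
  measurable [set y | s < dist x y].
Proof.
move=> mb.
have -> : [set y | s < dist x y] =
   ~` \bigcap_(k in setT) oball dist x (s + k.+1%:R^-1).
  apply/seteqP; split => y /=.
  - move=> sy; case/ltr_add_invr: sy => k hk H.
    have := H k I; rewrite /oball /= => h; by move: (lt_trans hk h); rewrite ltxx.
  - move=> H; rewrite ltNge; apply/negP => ys; apply: H => k _.
    rewrite /oball /=; have : 0 < k.+1%:R^-1 :> R by rewrite invr_gt0.
    move: (k.+1%:R^-1 : R) => e he; lra.
apply: measurableC; apply: bigcapT_measurable => k; exact: mb.
Qed.

Lemma prob_bound (R : realType) (dO dM : measure_display)
  (Omega : measurableType dO) (P : probability Omega R)
  (M : measurableType dM) (dist : M -> M -> R) (mu : probability M R)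
  (d n : nat) (X : 'I_n.+1 -> Omega -> M) (x : M) (Q Rr : R) :
  (forall y r, measurable (oball dist y r)) ->
  iid_from P mu X ->
  (forall r, 0 < r <= Rr -> ((Q * r ^+ d)%:E <= mu (oball dist x r))%E) ->
  forall s, 0 < s <= Rr ->
  (P [set w | (s < dist x (nearest dist X x w))%R]
     <= (expR (n.+1%:R * - (Q * s ^+ d)))%:E)%E.
Proof.
move=> mb [mX iid] hQ s hs.
set A0 := [set y | s < dist x y].
have mA0 : measurable A0 := @meas_gt R dM M dist x s mb.
have -> : [set w | s < dist x (nearest dist X x w)] =
    \bigcap_(i in setT) (X i @^-1` A0).
  apply/seteqP; split => w /=.
  - move=> h i _; have [H1 _] := nearest_le _ _ _ dist _ X x w.
    exact: lt_le_trans h (H1 i).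
  - by move=> h; have [_ [i ->]] := nearest_le _ _ _ dist _ X x w; exact: h i I.
rewrite (iid (fun=> A0)) //.
have hfin : mu A0 = (fine (mu A0))%:E by rewrite fineK // fin_num_measure.
have mB : measurable (oball dist x s) := mb x s.
have hfin2 : mu (oball dist x s) = (fine (mu (oball dist x s)))%:E.
  by rewrite fineK // fin_num_measure.
have b0 : 0 <= fine (mu A0) by rewrite -lee_fin -hfin.
have hb : fine (mu A0) <= 1 - fine (mu (oball dist x s)).
  rewrite -lee_fin -hfin EFinB -hfin2 -probability_setC //.
  apply: le_measure; rewrite ?inE //; first exact: measurableC.
  by move=> y /= sy; rewrite /oball /= => h; move: (lt_trans sy h); rewrite ltxx.
have hc : Q * s ^+ d <= fine (mu (oball dist x s)).
  by rewrite -lee_fin -hfin2; apply: hQ.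
rewrite hfin prodEFin lee_fin prodr_const card_ord expRM_natl.
apply: (@le_trans _ _ ((1 - Q * s ^+ d) ^+ n.+1)).
  apply: lerXn2r; rewrite ?nnegrE //; last by lra.
  by lra.
apply: lerXn2r; rewrite ?nnegrE ?expR_ge0 //; first by lra.
have := expR_ge1Dx (- (Q * s ^+ d)); lra.
Qed.

Lemma event_meas (R : realType) (dO dM : measure_display)
  (Omega : measurableType dO) 
  (M : measurableType dM) (dist : M -> M -> R)
  (n : nat) (X : 'I_n.+1 -> Omega -> M) (x : M) (s : R) :
  (forall y r, measurable (oball dist y r)) ->
  (forall i, measurable_fun setT (X i)) ->
  measurable [set w | (s < dist x (nearest dist X x w))%R].
Proof.
move=> mb mX.
set A0 := [set y | s < dist x y].
have mA0 : measurable A0 := @meas_gt R dM M dist x s mb.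
have -> : [set w | s < dist x (nearest dist X x w)] =
    \bigcap_(i in setT) (X i @^-1` A0).
  apply/seteqP; split => w /=.
  - move=> h i _; have [H1 _] := nearest_le _ _ _ dist _ X x w.
    exact: lt_le_trans h (H1 i).
  - by move=> h; have [_ [i ->]] := nearest_le _ _ _ dist _ X x w; exact: h i I.
apply: fin_bigcap_measurable; first exact: finite_finset.
by move=> i _; rewrite -[X in measurable X]setTI; exact: mX.
Qed.

Lemma powR_inv_pow (R : realType) (d : nat) (y : R) (p : R) : 0 <= y -> p != 0 ->
  (y `^ p) `^ (p^-1) = y.
Proof. by move=> y0 p0; rewrite -powRrM mulfV // powRr1. Qed.

Lemma s_pow (R : realType) (d m : nat) (L lam r : R) : (0 < d)%N -> 0 < lam -> 0 < L ->
  0 <= r -> lam ^+ 2 * (m%:R / L) `^ (2 / d%:R) <= r ->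
  m%:R / L <= (Num.sqrt r / lam) ^+ d.
Proof.
move=> d0 l0 L0 r0 h.
have dR : (0 : R) < d%:R by rewrite ltr0n.
set s := Num.sqrt r / lam.
have s0 : 0 <= s by rewrite /s divr_ge0 ?sqrtr_ge0 // ltW.
have s2 : s ^+ 2 = r / lam ^+ 2 by rewrite /s expr_div_n sqr_sqrtr.
have sd : s ^+ d = (s ^+ 2) `^ (d%:R / 2).
  rewrite -!powR_mulrn // -powRrM. by congr (_ `^ _); field.
have mL0 : 0 <= m%:R / L by rewrite divr_ge0 // ltW.
have h2 : (m%:R / L) `^ (2 / d%:R) <= s ^+ 2.
  by rewrite s2 ler_pdivlMr ?exprn_gt0 // mulrC.
rewrite sd.
have -> : m%:R / L = ((m%:R / L) `^ (2 / d%:R)) `^ (d%:R / 2).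
  rewrite -powRrM (_ : 2 / d%:R * (d%:R / 2) = 1) ?powRr1 //.
  by field; rewrite gt_eqF.
apply: ge0_ler_powR => //; rewrite ?nnegrE ?powR_ge0 ?exprn_ge0 //.
Qed.

Lemma powR_split (R : realType) (k : R) (L p : R) : 0 <= k -> 0 < L ->
  (k / L) `^ p = k `^ p * L `^ (- p).
Proof.
move=> k0 L0; rewrite powRM // ?invr_ge0 ?(ltW L0) //.
by rewrite -powR_inv1 ?(ltW L0) // -powRrM mulN1r.
Qed.

Lemma diff_core (R : realType) (d m : nat) : (0 < d)%N ->
  (m.+1%:R : R) `^ (2 / d%:R) - (m%:R : R) `^ (2 / d%:R) <= 2 * m%:R + 1.
Proof.
move=> d0.
have dR : (0 : R) < d%:R by rewrite ltr0n.
case: d d0 dR => [//|[|d]] _ dR.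
  rewrite divr1 !powR_mulrn // -natr1; nra.
set p : R := 2 / d.+2%:R.
have p0 : 0 < p by rewrite /p divr_gt0.
have p1 : p <= 1.
  rewrite /p ler_pdivrMr // mul1r (natrD _ 2 d) ler_wpDr //.
case: m => [|m].
  by rewrite powR0 ?gt_eqF // powR1; lra.
have h1 : (m.+2%:R : R) `^ p <= m.+2%:R.
  by apply: ler1_powR => //; rewrite ler1n.
have h2 : 1 <= (m.+1%:R : R) `^ p.
  rewrite -[X in X <= _](powRr0 (m.+1%:R : R)).
  have ha : (1:R) <= m.+1%:R by rewrite ler1n.
  exact: (ler_powR ha (ltW p0)).
have m0 : (0:R) <= m%:R by [].
rewrite -!natr1 in h1 h2 *; lra.
Qed.

Lemma diff_bound (R : realType) (d m : nat) (L : R) : (0 < d)%N -> 0 < L ->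
  (m.+1%:R / L) `^ (2 / d%:R) - (m%:R / L) `^ (2 / d%:R)
    <= L `^ (- (2 / d%:R)) * (2 * m%:R + 1).
Proof.
move=> d0 L0; rewrite !powR_split // -mulrBl mulrC.
apply: ler_wpM2l; first exact: powR_ge0.
exact: diff_core.
Qed.

Lemma exists_N (R : realType) (d : nat) (L lam Rr : R) : (0 < d)%N -> 0 < L ->
  0 < lam -> 0 < Rr ->
  exists N : nat, lam ^+ 2 * Rr ^+ 2 < lam ^+ 2 * (N%:R / L) `^ (2 / d%:R).
Proof.
move=> d0 L0 l0 R0.
have dR : (0 : R) < d%:R by rewrite ltr0n.
set y := (Rr ^+ 2) `^ (d%:R / 2).
exists (Num.truncn (L * y)).+1.
rewrite ltr_pM2l ?exprn_gt0 //.
have -> : Rr ^+ 2 = y `^ (2 / d%:R).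
  rewrite /y -powRrM (_ : d%:R / 2 * (2 / d%:R) = 1) ?powRr1 ?exprn_ge0 ?(ltW R0) //.
  by field; rewrite gt_eqF.
apply: gt0_ltr_powR; rewrite ?nnegrE ?divr_gt0 ?powR_ge0 ?divr_ge0 //; try exact: ltW.
rewrite ltr_pdivlMr // mulrC.
exact: truncnS_gt.
Qed.

Lemma bracket (R : realType) (a : nat -> R) (N : nat) (r : R) :
  a 0%N <= r -> r < a N -> exists m, (m < N)%N /\ a m <= r < a m.+1.
Proof.
move=> h0; elim: N => [|N IH] hN; first by move: (le_lt_trans h0 hN); rewrite ltxx.
case: (ltP r (a N)) => h.
  by have [m [mN hm]] := IH h; exists m; split => //; exact: ltnW.
by exists N; split => //; rewrite h hN.
Qed.

Lemma le_integral_nn d (T : measurableType d) (R : realType)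
  (mu : {measure set T -> \bar R}) (D : set T) (f1 f2 : T -> \bar R) :
  (forall x, D x -> (0 <= f1 x)%E) -> (forall x, D x -> (f1 x <= f2 x)%E) ->
  (\int[mu]_(x in D) f1 x <= \int[mu]_(x in D) f2 x)%E.
Proof.
move=> f10 f12.
have f20 : forall x, D x -> (0 <= f2 x)%E.
  by move=> x Dx; exact: le_trans (f10 x Dx) (f12 x Dx).
rewrite !ge0_integralE //; apply: ereal_sup_le => _ [h /= hf <-].
exists h => //= x; apply: le_trans (hf x) _; rewrite /patch.
by case: ifP => // /set_mem Dx; exact: f12.
Qed.

Theorem lemmaA1 (R : realType) (dO dM : measure_display)
  (Omega : measurableType dO) (P : probability Omega R)
  (M : measurableType dM) (dist : M -> M -> R) (mu : probability M R)
  (d n : nat) (X : 'I_n.+1 -> Omega -> M) (x : M) (Q Rr : R) :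
  is_metric dist ->
  (forall y r, measurable (oball dist y r)) ->
  (0 < d)%N ->
  iid_from P mu X ->
  0 < Q -> 0 < Rr ->
  (forall r, 0 < r <= Rr -> ((Q * r ^+ d)%:E <= mu (oball dist x r))%E) ->
  forall lam : R, 0 < lam ->
  (\int[lebesgue_measure]_(r in `[0%R, (lam ^+ 2 * Rr ^+ 2)%R])
      P [set w | (Num.sqrt r / lam < dist x (nearest dist X x w))%R]
   <= (2 * lam ^+ 2 * (n.+1)%:R `^ (- (2 / d%:R))
        / (1 - expR (- Q)) ^+ 2)%:E)%E.
Proof.
move=> hmet mb d0 hiid Q0 Rr0 hQ lam lam0.
have [mX _] := hiid.
have ell0 : (0 : R) < n.+1%:R by rewrite ltr0n.
have dR : (0:R) < d%:R by rewrite ltr0n.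
have p0 : (0 : R) < 2 / d%:R by rewrite divr_gt0.
have q0 : 0 <= expR (- Q) := expR_ge0 _.
have q1 : expR (- Q) < 1 by rewrite expR_lt1 oppr_lt0.
pose a : nat -> R := fun m => lam ^+ 2 * (m%:R / n.+1%:R) `^ (2 / d%:R).
have [N hN] := @exists_N R d n.+1%:R lam Rr d0 ell0 lam0 Rr0.
pose I := fun m : nat => [set` `[a m, a m.+1[%R] : set R.
pose G := fun r : R => (\sum_(m < N) (expR (- Q) ^+ m * \1_(I m) r)%:E)%E.
have H1 : (\int[lebesgue_measure]_(r in `[0%R, (lam ^+ 2 * Rr ^+ 2)%R])
      P [set w | (Num.sqrt r / lam < dist x (nearest dist X x w))%R] <=
    \int[lebesgue_measure]_(r in `[0%R, (lam ^+ 2 * Rr ^+ 2)%R]) G r)%E.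
  apply: le_integral_nn => r hr; first exact: measure_ge0.
  move: hr; rewrite /= in_itv /= => /andP[hr0 hrL].
  have a0 : a 0%N = 0 by rewrite /a mul0r powR0 ?gt_eqF // mulr0.
  have a0r : a 0%N <= r by rewrite a0.
  have [m [mN /andP[ham hma]]] :=
    @bracket R a N r a0r (le_lt_trans hrL hN).
  have Gm : ((expR (- Q) ^+ m)%:E <= G r)%E.
    rewrite /G sumEFin lee_fin (bigD1 (Ordinal mN)) //=.
    rewrite indicE mem_set ?mulr1; last by rewrite /I /= in_itv /= ham hma.
    rewrite lerDl; apply: sumr_ge0 => i _; apply: mulr_ge0; first exact: exprn_ge0.
    by rewrite indicE ler0n.
  apply: le_trans Gm.
  case: m mN ham hma => [|m] mN ham hma.
    rewrite expr0; apply: probability_le1; exact: event_meas.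
  have apos : 0 < a m.+1.
    by rewrite /a mulr_gt0 ?exprn_gt0 // powR_gt0 // divr_gt0 // ltr0n.
  have r0 : 0 < r := lt_le_trans apos ham.
  have s0 : 0 < Num.sqrt r / lam by rewrite divr_gt0 ?sqrtr_gt0.
  have sR : Num.sqrt r / lam <= Rr.
    rewrite ler_pdivrMr //.
    have : Num.sqrt r <= Num.sqrt ((Rr * lam) ^+ 2).
      by rewrite ler_sqrt ?sqr_ge0 // exprMn mulrC.
    by rewrite sqrtr_sqr ger0_norm // mulr_ge0 // ltW.
  have hs : 0 < Num.sqrt r / lam <= Rr by rewrite s0 sR.
  have PB := prob_bound _ _ _ _ P _ dist mu d n X x Q Rr mb hiid hQ _ hs.
  apply: le_trans PB _.
  rewrite lee_fin -expRM_natl ler_expR.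
  have hsp := @s_pow R d m.+1 n.+1%:R lam r d0 lam0 ell0 (ltW r0) ham.
  have : m.+1%:R <= n.+1%:R * (Num.sqrt r / lam) ^+ d.
    by rewrite mulrC -ler_pdivrMr.
  move: ((Num.sqrt r / lam) ^+ d) => t ht.
  nra.
apply: le_trans H1 _.
have mI : forall k, measurable (I k) by move=> k; exact: measurable_itv.
rewrite /G ge0_integral_sum //; last first.
  move=> k; apply/measurable_EFinP; apply: measurable_funM.
    exact: measurable_cst.
  apply: measurable_indic; exact: mI.
apply: (@le_trans _ _ (\sum_(k < N)
   ((expR (- Q) ^+ k * (lam ^+ 2 * n.+1%:R `^ (- (2 / d%:R)) * (2 * k%:R + 1)))%:E))%E).
  apply: lee_sum => k _.
  have mD : measurable (`[0%R, (lam ^+ 2 * Rr ^+ 2)%R] : set R).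
    exact: measurable_itv.
  have hneg : (expR (- Q) ^+ k < 0)%R -> I k = set0.
    by rewrite ltNge exprn_ge0.
  have HZ := @integralZl_indic _ _ _ lebesgue_measure _ mD (fun=> I k) _ hneg (mI k).
  simpl in HZ; rewrite HZ {HZ}.
  rewrite (@integral_indic _ _ _ lebesgue_measure _ mD _ (mI k)) EFinM.
  apply: lee_wpmul2l; first by rewrite lee_fin exprn_ge0.
  apply: le_trans (@measureIl _ _ _ lebesgue_measure _ _ (mI k) mD) _.
  have HL := @lebesgue_measure_itv R `[a k, a k.+1[%R.
  move: HL; set V := (if _ then _ else _) => HL.
  have hle : (lebesgue_measure [set` `[a k, a k.+1[%R] <= V)%E by rewrite HL.
  apply: le_trans hle _; rewrite /V /=.
  case: ifP => _; last first.
    have hB : (0:R) <= lam ^+ 2 * n.+1%:R `^ (- (2 / d%:R)) * (2 * k%:R + 1).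
      have h1 : (0:R) <= 2 * k%:R + 1 by have : (0:R) <= k%:R by []; lra.
      apply: mulr_ge0 => //; apply: mulr_ge0; [exact: sqr_ge0 | exact: powR_ge0].
    by rewrite -lee_fin in hB.
  rewrite -EFinD lee_fin /a -mulrBr -mulrA ler_wpM2l ?exprn_ge0 //.
    exact: ltW.
  exact: diff_bound.
rewrite sumEFin lee_fin.
set c := n.+1%:R `^ (- (2 / d%:R)).
have c0 : 0 <= c by exact: powR_ge0.
rewrite (eq_bigr (fun k : 'I_N => (lam ^+ 2 * c) * ((2 * k%:R + 1) * expR (- Q) ^+ k))); last first.
  by move=> k _; ring.
rewrite -mulr_sumr.
have hS := @sum_bound R (expR (- Q)) N (introT andP (conj q0 q1)).
apply: le_trans (ler_wpM2l _ hS) _; first by rewrite mulr_ge0 ?sqr_ge0.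
set D := (1 - expR (- Q)) ^+ 2.
rewrite le_eqVlt; apply/orP; left; apply/eqP; ring.
Qed.
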